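(* Let $d\geq1$ and let $f:[0,1]^d\to\mathbb{R}_+$ be the function computed by some ReLU net with input dimension $d$, output dimension $1$ and arbitrary width. Then there exist affine functions $g_\alpha,h_\beta:[0,1]^d\to\mathbb{R}$ ($1\leq\alpha\leq N$, $1\leq\beta\leq M$) such that $f$ can be written as the difference of positive convex functions $$f=g-h,\qquad g:=\max_{1\leq\alpha\leq N}g_\alpha,\qquad h:=\max_{1\leq\beta\leq M}h_\beta.$$ Moreover, there exists a ReLU net $\mathcal N$ with input dimension $d$, hidden layer width $d+3$, output dimension $1$ and $\mathrm{depth}(\mathcal N)=2(M+N)$ that computes $f$ exactly on $[0,1]^d$. Finally, if $f$ is convex (so that $h$ vanishes and $f=\max_{1\leq\alpha\leq N}g_\alpha$), then the width of $\mathcal N$ can be taken to be $d+1$ and the depth can be taken to be $N$.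
   Context: For $m\geq1$, $\mathrm{ReLU}(x_1,\dots,x_m)=(\max\{0,x_1\},\dots,\max\{0,x_m\})$. A feed-forward ReLU net $\mathcal N$ with input dimension $d_{\mathrm{in}}$, hidden layer width $w$, depth $n$ and output dimension $d_{\mathrm{out}}$ is a function of the form $f_{\mathcal N}=\mathrm{ReLU}\circ A_n\circ\mathrm{ReLU}\circ A_{n-1}\circ\cdots\circ\mathrm{ReLU}\circ A_1$, mapping $\mathbb{R}^{d_{\mathrm{in}}}$ to $\mathbb{R}_+^{d_{\mathrm{out}}}$, where $A_1:\mathbb{R}^{d_{\mathrm{in}}}\to\mathbb{R}^w$, $A_j:\mathbb{R}^w\to\mathbb{R}^w$ ($2\leq j\leq n-1$), $A_n:\mathbb{R}^w\to\mathbb{R}^{d_{\mathrm{out}}}$ are affine maps. *)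

(* Defs.v *)
From HB Require Import structures.
From mathcomp Require Import all_boot all_order all_algebra.
From mathcomp Require Import reals.
Set Implicit Arguments. Unset Strict Implicit. Unset Printing Implicit Defensive.
Import Order.TTheory GRing.Theory Num.Theory.
Local Open Scope ring_scope.

Section ReLU.
Variable R : realType.

Definition relu (k : nat) (v : 'cV[R]_k) : 'cV[R]_k := \col_i Num.max (v i 0) 0.

Definition affine_map (m k : nat) : Type := ('M[R]_(k, m) * 'cV[R]_k)%type.
Definition app_aff (m k : nat) (A : affine_map m k) (x : 'cV[R]_m) : 'cV[R]_k :=
  A.1 *m x + A.2.

(* F : R^din -> R^dout is the function of a feed-forward ReLU net with input
   dimension din, hidden layer width w, depth n and output dimension dout:
   F = ReLU o A_n o ReLU o ... o ReLU o A_1. *)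
Definition relu_net_fun (din w n dout : nat) (F : 'cV[R]_din -> 'cV[R]_dout) : Prop :=
  (n = 1%N /\ exists A : affine_map din dout,
      forall x, F x = relu (app_aff A x))
  \/
  ((2 <= n)%N /\ exists (A1 : affine_map din w) (As : seq (affine_map w w))
                        (An : affine_map w dout),
      size As = (n - 2)%N /\
      forall x, F x = relu (app_aff An
                 (foldl (fun v A => relu (app_aff A v)) (relu (app_aff A1 x)) As))).

Definition in_cube (d : nat) (x : 'cV[R]_d) : Prop :=
  forall i, 0 <= x i 0 <= 1.

Definition affine_fun (d : nat) (g : 'cV[R]_d -> R) : Prop :=
  exists (a : 'cV[R]_d) (c : R), forall x, g x = \sum_(i < d) a i 0 * x i 0 + c.

Definition max_fam (d N : nat) (g : 'I_N.+1 -> 'cV[R]_d -> R) (x : 'cV[R]_d) : R :=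
  \big[Num.max/g ord0 x]_(i < N.+1) g i x.

Definition convex_on_cube (d : nat) (f : 'cV[R]_d -> R) : Prop :=
  forall x y (t : R), in_cube x -> in_cube y -> 0 <= t <= 1 ->
    f (t *: x + (1 - t) *: y) <= t * f x + (1 - t) * f y.


End ReLU.
Arguments relu_net_fun {R} din w n dout F.

(* Main.v *)
Require Import Defs.
From HB Require Import structures.
From mathcomp Require Import all_boot all_order all_algebra.
From mathcomp Require Import reals.
From mathcomp Require Import ring lra zify.
From Stdlib Require Import Classical.
Import Order.TTheory GRing.Theory Num.Theory.
Local Open Scope ring_scope.
Set Implicit Arguments. Unset Strict Implicit. Unset Printing Implicit Defensive.

Section DC.
Variable R : realType.
Variable d : nat.

Definition aff := ('cV[R]_d * R)%type.
Definition ev (p : aff) (x : 'cV[R]_d) : R := \sum_(i < d) p.1 i 0 * x i 0 + p.2.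
Definition addp (p q : aff) : aff := (p.1 + q.1, p.2 + q.2).
Definition subp (p q : aff) : aff := (p.1 - q.1, p.2 - q.2).
Definition sclp (c : R) (p : aff) : aff := (c *: p.1, c * p.2).

Lemma ev_add p q x : ev (addp p q) x = ev p x + ev q x.
Proof.
rewrite /ev /= addrACA -big_split /=; congr (_ + _).
by apply: eq_bigr => i _; rewrite mxE mulrDl.
Qed.

Lemma ev_sub p q x : ev (subp p q) x = ev p x - ev q x.
Proof.
rewrite /ev /= opprD addrACA -sumrN -big_split /=; congr (_ + _).
by apply: eq_bigr => i _; rewrite !mxE mulrBl.
Qed.

Lemma ev_scl c p x : ev (sclp c p) x = c * ev p x.
Proof.
rewrite /ev /= mulrDr mulr_sumr; congr (_ + _).
by apply: eq_bigr => i _; rewrite !mxE mulrA.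
Qed.

Lemma ev_const c x : ev (0, c) x = c.
Proof. by rewrite /ev /= big1 ?add0r // => i _; rewrite mxE mul0r. Qed.

Definition ismax (s : seq R) (m : R) := m \in s /\ forall y, y \in s -> y <= m.

Lemma ismax_uniq s m1 m2 : ismax s m1 -> ismax s m2 -> m1 = m2.
Proof.
move=> [h1 u1] [h2 u2]; apply/eqP; rewrite eq_le; apply/andP; split.
  exact: u2. exact: u1.
Qed.

Lemma ismax_mem s1 s2 m : s1 =i s2 -> ismax s1 m -> ismax s2 m.
Proof. by move=> e [h u]; split; [rewrite -e | move=> y; rewrite -e; apply: u]. Qed.

Definition maxaff (phi : 'cV[R]_d -> R) :=
  exists l : seq aff, forall x, ismax [seq ev p x | p <- l] (phi x).

Lemma maxaff_ext phi psi : (forall x, phi x = psi x) -> maxaff psi -> maxaff phi.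
Proof. by move=> e [l hl]; exists l => x; rewrite e. Qed.

Lemma maxaff_aff p : maxaff (ev p).
Proof.
exists [:: p] => x; split; first by rewrite inE.
by move=> y; rewrite inE => /eqP ->.
Qed.

Lemma maxaff_add phi psi : maxaff phi -> maxaff psi -> maxaff (fun x => phi x + psi x).
Proof.
move=> [l1 h1] [l2 h2]; exists [seq addp p q | p <- l1, q <- l2] => x.
have [m1 u1] := h1 x; have [m2 u2] := h2 x.
case/mapP: m1 => p1 p1in e1; case/mapP: m2 => p2 p2in e2.
split.
  apply/mapP; exists (addp p1 p2); first by apply/allpairsP; exists (p1, p2).
  by rewrite ev_add -e1 -e2.
move=> y /mapP [r /allpairsP [[p q] [/= pin qin ->]] ->].
rewrite ev_add lerD //; [apply: u1 | apply: u2]; exact: map_f.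
Qed.

Lemma maxaff_max phi psi : maxaff phi -> maxaff psi -> maxaff (fun x => Num.max (phi x) (psi x)).
Proof.
move=> [l1 h1] [l2 h2]; exists (l1 ++ l2) => x.
have [m1 u1] := h1 x; have [m2 u2] := h2 x.
rewrite map_cat; split.
  by case: (leP (phi x) (psi x)) => _; rewrite mem_cat ?m1 ?m2 ?orbT.
move=> y; rewrite mem_cat => /orP [/u1|/u2] hy; rewrite le_max hy ?orbT //.
Qed.

Lemma maxaff_scl c phi : 0 <= c -> maxaff phi -> maxaff (fun x => c * phi x).
Proof.
move=> c0 [l h]; exists (map (sclp c) l) => x.
have [m u] := h x; case/mapP: m => p pin e.
split.
  by apply/mapP; exists (sclp c p); [exact: map_f | rewrite ev_scl e].
move=> y /mapP [r /mapP [q qin ->] ->]; rewrite ev_scl ler_wpM2l //.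
apply: u; exact: map_f.
Qed.

Lemma maxDr (a b c : R) : Num.max (a + c) (b + c) = Num.max a b + c.
Proof. by case: (leP a b) => h; case: (leP (a + c) (b + c)) => h'; rewrite // ?lerD2r ?ltrD2r in h'; [move: (lt_le_trans h' h) | move: (lt_le_trans h h')]; rewrite ltxx. Qed.

Definition DC (phi : 'cV[R]_d -> R) :=
  exists g h, maxaff g /\ maxaff h /\ forall x, phi x = g x - h x.

Lemma DC_ext phi psi : (forall x, phi x = psi x) -> DC psi -> DC phi.
Proof. by move=> e [g [h [hg [hh E]]]]; exists g, h; split=> // ; split=> // x; rewrite e. Qed.

Lemma DC_aff p : DC (ev p).
Proof.
exists (ev p), (ev (0, 0)); split; first exact: maxaff_aff.
split; first exact: maxaff_aff.
by move=> x; rewrite ev_const subr0.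
Qed.

Lemma DC_const c : DC (fun _ => c).
Proof. by apply: (DC_ext (psi := ev (0, c))) => [x|]; [rewrite ev_const | exact: DC_aff]. Qed.

Lemma DC_add phi psi : DC phi -> DC psi -> DC (fun x => phi x + psi x).
Proof.
move=> [g1 [h1 [G1 [H1 E1]]]] [g2 [h2 [G2 [H2 E2]]]].
exists (fun x => g1 x + g2 x), (fun x => h1 x + h2 x); split; first exact: maxaff_add.
split; first exact: maxaff_add.
by move=> x; rewrite E1 E2 opprD addrACA.
Qed.

Lemma DC_scl c phi : DC phi -> DC (fun x => c * phi x).
Proof.
move=> [g [h [G [H E]]]]; case: (leP 0 c) => c0.
  exists (fun x => c * g x), (fun x => c * h x); split; first exact: maxaff_scl.
  split; first exact: maxaff_scl.
  by move=> x; rewrite E mulrBr.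
exists (fun x => - c * h x), (fun x => - c * g x); split.
  by apply: maxaff_scl => //; rewrite oppr_ge0 ltW.
split; first by apply: maxaff_scl => //; rewrite oppr_ge0 ltW.
by move=> x; rewrite E !mulNr opprK mulrBr addrC.
Qed.

Lemma DC_max phi psi : DC phi -> DC psi -> DC (fun x => Num.max (phi x) (psi x)).
Proof.
move=> [g1 [h1 [G1 [H1 E1]]]] [g2 [h2 [G2 [H2 E2]]]].
exists (fun x => Num.max (g1 x + h2 x) (g2 x + h1 x)), (fun x => h1 x + h2 x).
split; first by apply: maxaff_max; apply: maxaff_add.
split; first exact: maxaff_add.
move=> x; rewrite E1 E2.
have -> : g1 x + h2 x = (g1 x - h1 x) + (h1 x + h2 x) by ring.
have -> : g2 x + h1 x = (g2 x - h2 x) + (h1 x + h2 x) by ring.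
by rewrite maxDr addrK.
Qed.

Lemma DC_sum (I : Type) (r : seq I) (f : I -> 'cV[R]_d -> R) :
  (forall i, DC (f i)) -> DC (fun x => \sum_(i <- r) f i x).
Proof.
move=> hf; elim: r => [|i r IH].
  by apply: (DC_ext (psi := fun _ => 0)) => [x|]; [rewrite big_nil | exact: DC_const].
apply: (DC_ext (psi := fun x => f i x + \sum_(j <- r) f j x)) => [x|]; first by rewrite big_cons.
exact: DC_add.
Qed.


Lemma relu_entry k (u : 'cV[R]_k) i j : relu u i j = Num.max (u i 0) 0.
Proof. by rewrite /relu mxE. Qed.

Lemma app_aff_entry m k (A : affine_map R m k) (u : 'cV[R]_m) i :
  app_aff A u i 0 = \sum_j A.1 i j * u j 0 + A.2 i 0.
Proof. by rewrite /app_aff !mxE. Qed.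

Lemma DC_coord j : DC (fun x : 'cV[R]_d => x j 0).
Proof.
apply: (DC_ext (psi := ev (\col_i (i == j)%:R, 0))); last exact: DC_aff.
move=> x; rewrite /ev /= addr0 (bigD1 j) //= mxE eqxx mul1r big1 ?addr0 //.
by move=> i /negbTE hi; rewrite mxE hi mul0r.
Qed.

Lemma DC_layer m k (A : affine_map R m k) (v : 'cV[R]_d -> 'cV[R]_m) :
  (forall j, DC (fun x => v x j 0)) -> forall i, DC (fun x => relu (app_aff A (v x)) i 0).
Proof.
move=> hv i.
apply: (DC_ext (psi := fun x => Num.max (\sum_j A.1 i j * v x j 0 + A.2 i 0) 0)).
  by move=> x; rewrite relu_entry app_aff_entry.
apply: DC_max; last exact: DC_const.
apply: DC_add; last exact: DC_const.
by apply: DC_sum => j; apply: DC_scl.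
Qed.

Lemma DC_fold w (As : seq (affine_map R w w)) (v : 'cV[R]_d -> 'cV[R]_w) :
  (forall j, DC (fun x => v x j 0)) ->
  forall j, DC (fun x => foldl (fun u A => relu (app_aff A u)) (v x) As j 0).
Proof.
elim: As v => [|A As IH] v hv //=.
apply: (IH (fun x => relu (app_aff A (v x)))); exact: DC_layer.
Qed.

Lemma net_DC w n (F : 'cV[R]_d -> 'cV[R]_1) :
  relu_net_fun d w n 1 F -> DC (fun x => F x 0 0) /\ forall x, 0 <= F x 0 0.
Proof.
case=> [[_ [A hA]] | [_ [A1 [As [An [_ hA]]]]]].
  split; last by move=> x; rewrite hA relu_entry le_max lexx orbT.
  apply: (DC_ext (psi := fun x => relu (app_aff A x) 0 0)); first by move=> x; rewrite hA.
  by apply: (@DC_layer _ _ A (fun x => x)) => j; exact: DC_coord.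
split; last by move=> x; rewrite hA relu_entry le_max lexx orbT.
apply: (DC_ext (psi := fun x => relu (app_aff An (foldl (fun v A => relu (app_aff A v)) (relu (app_aff A1 x)) As)) 0 0)).
  by move=> x; rewrite hA.
apply: (@DC_layer _ _ An (fun x => foldl (fun v A => relu (app_aff A v)) (relu (app_aff A1 x)) As)).
apply: DC_fold; apply: (@DC_layer _ _ A1 (fun x => x)); exact: DC_coord.
Qed.

End DC.

Section Conv.
Variable R : realType.
Variable d : nat.
Local Notation aff := (aff R d).
Local Notation ev := (@ev R d).

Lemma lin_pos (u0 u1 : R) : 0 < u0 ->
  exists2 t0, 0 < t0 & forall t, 0 < t <= t0 -> 0 < u0 + t * u1.
Proof.
move=> u0p; have a0 : 0 <= `|u1| by [].
have a1 : 0 < `|u1| + 1 by rewrite ltr_wpDl.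
exists (u0 / (`|u1| + 1)); first by rewrite divr_gt0.
move=> t /andP [t0 tle].
have e : u0 / (`|u1| + 1) * (`|u1| + 1) = u0 by rewrite divfK // gt_eqF.
have h1 : - `|u1| <= u1 by rewrite lerNl ler_normr lexx orbT.
have h2 : t * - `|u1| <= t * u1 by rewrite ler_wpM2l // ltW.
have h3 : t * `|u1| <= u0 / (`|u1| + 1) * `|u1| by rewrite ler_wpM2r.
nra.
Qed.

Lemma small_common (T : eqType) (l : seq T) (P : T -> R -> Prop) :
  (forall p, p \in l -> exists2 t0, 0 < t0 & forall t, 0 < t <= t0 -> P p t) ->
  exists2 t0, 0 < t0 & forall p, p \in l -> forall t, 0 < t <= t0 -> P p t.
Proof.
elim: l => [|a l IH] h; first by exists 1 => //.
have [t1 t1p h1] := h a (mem_head _ _).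
have [t2 t2p h2] : exists2 t0, 0 < t0 & forall p, p \in l -> forall t, 0 < t <= t0 -> P p t.
  by apply: IH => p pl; apply: h; rewrite inE pl orbT.
exists (Num.min t1 t2); first by rewrite lt_min t1p t2p.
move=> p; rewrite inE => /orP [/eqP -> | pl] t /andP [tp tle]; rewrite le_min in tle;
  case/andP: tle => tl1 tl2.
  by apply: h1; rewrite tp tl1.
by apply: h2; rewrite ?tp ?tl2.
Qed.

Lemma argmax_seq (T : eqType) (l : seq T) (f : T -> R) : l != [::] ->
  exists2 p, p \in l & forall q, q \in l -> f q <= f p.
Proof.
elim: l => [|a l IH] // _.
case: (eqVneq l [::]) => [->|ln].
  by exists a; rewrite ?mem_head // => q; rewrite inE => /eqP ->.
have [p pl hp] := IH ln.
case: (leP (f a) (f p)) => h.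
  exists p; first by rewrite inE pl orbT.
  by move=> q; rewrite inE => /orP [/eqP -> // | /hp].
exists a; first exact: mem_head.
move=> q; rewrite inE => /orP [/eqP -> // | /hp hq]; exact: (le_trans hq (ltW h)).
Qed.

Definition lin (a x : 'cV[R]_d) : R := \sum_(i < d) a i 0 * x i 0.

Lemma evE p x : ev p x = lin p.1 x + p.2. Proof. by []. Qed.

Lemma lin_comb a (x y : 'cV[R]_d) s r : lin a (s *: x + r *: y) = s * lin a x + r * lin a y.
Proof.
rewrite /lin !mulr_sumr -big_split /=; apply: eq_bigr => i _; rewrite !mxE /=; ring.
Qed.

Lemma linB a b (x : 'cV[R]_d) : lin (a - b) x = lin a x - lin b x.
Proof.
rewrite /lin -sumrB; apply: eq_bigr => i _; rewrite !mxE; ring.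
Qed.

Lemma ev_comb p x y s : ev p (s *: x + (1 - s) *: y) = s * ev p x + (1 - s) * ev p y.
Proof. rewrite !evE lin_comb; ring. Qed.

Lemma comb_cube (x y : 'cV[R]_d) s : in_cube x -> in_cube y -> 0 <= s <= 1 ->
  in_cube (s *: x + (1 - s) *: y).
Proof.
move=> hx hy /andP [s0 s1] i; rewrite !mxE.
have /andP [x0 x1] := hx i; have /andP [y0 y1] := hy i.
apply/andP; split; nra.
Qed.

Lemma generic_point (D : seq 'cV[R]_d) (y : 'cV[R]_d) :
  (forall u, u \in D -> u != 0) ->
  exists c, in_cube c /\ forall u, u \in D -> lin u c != lin u y.
Proof.
move=> hD.
pose Pu (u : 'cV[R]_d) : {poly R} :=
  \sum_(i < d) (u i 0) *: 'X^(i.+1) - (lin u y)%:P.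
have Pu_ev u l : (Pu u).[l] = lin u (\col_i l ^+ i.+1) - lin u y.
  rewrite /Pu hornerD hornerN hornerC horner_sum /lin; congr (_ - _).
  by apply: eq_bigr => i _; rewrite hornerZ hornerXn mxE.
have Pu_nz u : u \in D -> Pu u != 0.
  move=> uD; have := hD u uD; apply: contraNneq => hP.
  apply/eqP/matrixP => i j; rewrite ord1 mxE.
  have := congr1 (fun p : {poly R} => p`_(i.+1)) hP; rewrite /= coef0 /Pu.
  rewrite coefB coefC /= subr0 coef_sum (bigD1 i) //= coefZ coefXn eqxx mulr1.
  rewrite big1 ?addr0 // => k ki; rewrite coefZ coefXn eqSS.
  by move: ki; rewrite eq_sym -(inj_eq val_inj) => /negbTE /= ->; rewrite mulr0.
pose Q := \prod_(u <- D) Pu u.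
have Qnz : Q != 0 by rewrite prodf_seq_neq0; apply/allP => u uD /=; exact: Pu_nz.
pose rs := [seq ((k.+2)%:R : R)^-1 | k <- iota 0 (size Q)].
have urs : uniq rs.
  rewrite map_inj_in_uniq ?iota_uniq // => a b _ _ /invr_inj /eqP.
  by rewrite eqr_nat eqSS eqSS => /eqP.
have : ~~ all (root Q) rs.
  apply/negP => hall; have := max_poly_roots Qnz hall urs.
  by rewrite size_map size_iota ltnn.
case/allPn => l /mapP [k _ ->] nr.
set lam := ((k.+2)%:R : R)^-1 in nr *.
have l0 : 0 <= lam by rewrite invr_ge0 ler0n.
have l1 : lam <= 1 by rewrite invf_le1 ?ltr0n // ler1n.
exists (\col_i lam ^+ i.+1); split.
  by move=> i; rewrite mxE exprn_ge0 // exprn_ile1.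
move=> u uD; rewrite -subr_eq0 -Pu_ev.
move: nr; rewrite /root /Q horner_prod prodf_seq_neq0 => /allP /(_ u uD) /=.
done.
Qed.


Lemma ev_lin_eq p q : p.1 = q.1 -> forall y, ev p y = ev q y -> forall x, ev p x = ev q x.
Proof.
move=> e1 y; rewrite !evE e1 => /addrI e2 x; by rewrite !evE e1 e2.
Qed.

Lemma ismax_is (l : seq aff) M ps x : ismax [seq ev p x | p <- l] M -> ps \in l ->
  (forall p, p \in l -> (forall z, ev p z = ev ps z) \/ ev p x < ev ps x) -> M = ev ps x.
Proof.
move=> [Min Mub] psl h; apply/eqP; rewrite eq_le; apply/andP; split; last first.
  by apply: Mub; exact: map_f.
case/mapP: Min => p pl ->; case: (h p pl) => [->|/ltW] //.
Qed.

Lemma select (l : seq aff) M (y c : 'cV[R]_d) :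
  (forall x, ismax [seq ev p x | p <- l] (M x)) ->
  (forall p p', p \in l -> p' \in l -> p.1 != p'.1 -> lin (p.1 - p'.1) c != lin (p.1 - p'.1) y) ->
  exists2 ps, ps \in l & ev ps y = M y /\
   exists2 t0, 0 < t0 & forall p, p \in l -> forall t, 0 < t <= t0 ->
     (forall z, ev p z = ev ps z) \/ ev p (t *: c + (1 - t) *: y) < ev ps (t *: c + (1 - t) *: y).
Proof.
move=> hM gen.
pose A0 := [seq p <- l | ev p y == M y].
have A0n : A0 != [::].
  have [Min _] := hM y; case/mapP: Min => p pl pe.
  apply/negP => /eqP A0e; have : p \in A0 by rewrite mem_filter pe eqxx pl.
  by rewrite A0e.
have [ps psA hps] := argmax_seq (fun p => lin p.1 c - lin p.1 y) A0n.
move: psA; rewrite mem_filter => /andP [/eqP psy psl].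
exists ps => //; split => //.
apply: (small_common (P := fun p t => (forall z, ev p z = ev ps z) \/ ev p (t *: c + (1 - t) *: y) < ev ps (t *: c + (1 - t) *: y))) => p pl.
have [_ Mub] := hM y.
have evc t q : ev q (t *: c + (1 - t) *: y) = ev q y + t * (lin q.1 c - lin q.1 y).
  by rewrite ev_comb !evE; ring.
case: (eqVneq (ev p y) (M y)) => [py|pny].
  have pA : p \in A0 by rewrite mem_filter py eqxx pl.
  case: (eqVneq p.1 ps.1) => [e1|n1].
    exists 1 => // t _; left; apply: (ev_lin_eq e1 (y := y)); by rewrite py psy.
  have := gen p ps pl psl n1; rewrite !linB => ne.
  have lt : lin p.1 c - lin p.1 y < lin ps.1 c - lin ps.1 y.
    rewrite lt_neqAle hps // andbT; apply: contra ne => /eqP e.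
    by apply/eqP; move: e; lra.
  exists 1 => // t /andP [t0 _]; right; rewrite !evc py psy ltrD2l ltr_pM2l //.
have plt : ev p y < ev ps y.
  rewrite psy lt_neqAle pny /=; apply: Mub; exact: map_f.
have pp : 0 < ev ps y - ev p y by rewrite subr_gt0.
have [t0 t0p ht0] := @lin_pos (ev ps y - ev p y) ((lin ps.1 c - lin ps.1 y) - (lin p.1 c - lin p.1 y)) pp.
exists t0 => // t ht; right; rewrite !evc -subr_gt0.
have := ht0 t ht; lra.
Qed.


Lemma min3 (a b : R) : 0 < a -> 0 < b -> exists t, [/\ 0 < t, t <= a, t <= b & t <= 1].
Proof.
move=> a0 b0; exists (Num.min a (Num.min b 1)).
split; [by rewrite !lt_min a0 b0 ltr01 | by rewrite ge_min lexx | by rewrite !ge_min lexx orbT | by rewrite !ge_min lexx !orbT].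
Qed.

Lemma convex_piece (f : 'cV[R]_d -> R) (lg lh : seq aff) Mg Mh :
  (forall x, ismax [seq ev p x | p <- lg] (Mg x)) ->
  (forall x, ismax [seq ev p x | p <- lh] (Mh x)) ->
  (forall x, f x = Mg x - Mh x) -> convex_on_cube f -> forall y, in_cube y ->
  exists p q, [/\ p \in lg, q \in lh, ev p y - ev q y = f y &
                forall z, in_cube z -> ev p z - ev q z <= f z].
Proof.
move=> hg hh hf hconv y ycube.
pose D := [seq u <- [seq p.1 - p'.1 | p <- lg, p' <- lg] ++ [seq p.1 - p'.1 | p <- lh, p' <- lh] | u != 0].
have [c [ccube hc]] : exists c, in_cube c /\ forall u, u \in D -> lin u c != lin u y.
  by apply: generic_point => u; rewrite mem_filter => /andP [].
have geng : forall p p', p \in lg -> p' \in lg -> p.1 != p'.1 -> lin (p.1 - p'.1) c != lin (p.1 - p'.1) y.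
  move=> p p' pl p'l ne; apply: hc; rewrite mem_filter subr_eq0 ne mem_cat /=.
  by rewrite (allpairs_f (fun p p' : aff => p.1 - p'.1) pl p'l).
have genh : forall p p', p \in lh -> p' \in lh -> p.1 != p'.1 -> lin (p.1 - p'.1) c != lin (p.1 - p'.1) y.
  move=> p p' pl p'l ne; apply: hc; rewrite mem_filter subr_eq0 ne mem_cat /=.
  by rewrite (allpairs_f (fun p p' : aff => p.1 - p'.1) pl p'l) orbT.
have [ps psl [psy [t0g t0gp hsg]]] := select hg geng.
have [qs qsl [qsy [t0h t0hp hsh]]] := select hh genh.
have [t [tp tg th t1]] := min3 t0gp t0hp.
pose pt := t *: c + (1 - t) *: y.
have ptcube : in_cube pt by apply: comb_cube => //; rewrite ltW.
have htg : forall p, p \in lg -> (forall z, ev p z = ev ps z) \/ ev p pt < ev ps pt.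
  by move=> p pl; apply: hsg; rewrite // tp tg.
have hth : forall p, p \in lh -> (forall z, ev p z = ev qs z) \/ ev p pt < ev qs pt.
  by move=> p pl; apply: hsh; rewrite // tp th.
have Mgpt : Mg pt = ev ps pt by apply: ismax_is.
have Mhpt : Mh pt = ev qs pt by apply: ismax_is.
exists ps, qs; split => //; first by rewrite hf psy qsy.
move=> z zcube.
have evw q s : ev q (s *: z + (1 - s) *: pt) = ev q pt + s * (ev q z - ev q pt).
  by rewrite ev_comb; ring.
have step (l : seq aff) rs (ht : forall p, p \in l -> (forall z, ev p z = ev rs z) \/ ev p pt < ev rs pt) :
    exists2 s0, 0 < s0 & forall p, p \in l -> forall s, 0 < s <= s0 ->
      (forall z, ev p z = ev rs z) \/ ev p (s *: z + (1 - s) *: pt) < ev rs (s *: z + (1 - s) *: pt).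
  apply: (small_common (P := fun p s => (forall z, ev p z = ev rs z) \/ ev p (s *: z + (1 - s) *: pt) < ev rs (s *: z + (1 - s) *: pt))) => p pl.
  case: (ht p pl) => [e|lt]; first by exists 1 => // s _; left.
  have pp : 0 < ev rs pt - ev p pt by rewrite subr_gt0.
  have [s0 s0p hs0] := @lin_pos _ ((ev rs z - ev rs pt) - (ev p z - ev p pt)) pp.
  exists s0 => // s hs; right; rewrite !evw -subr_gt0; have := hs0 s hs; lra.
have [sg sgp hg2] := step lg ps htg.
have [sh shp hh2] := step lh qs hth.
have [s [sp sg' sh' s1]] := min3 sgp shp.
pose w := s *: z + (1 - s) *: pt.
have Mgw : Mg w = ev ps w by apply: ismax_is => // p pl; apply: hg2; rewrite // sp sg'.
have Mhw : Mh w = ev qs w by apply: ismax_is => // p pl; apply: hh2; rewrite // sp sh'.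
have hs01 : 0 <= s <= 1 by rewrite (ltW sp) s1.
have := hconv z pt s zcube ptcube hs01; rewrite -/w !hf Mgw Mhw Mgpt Mhpt !evw => hc2.
have : s * (ev ps z - ev qs z) <= s * (Mg z - Mh z) by lra.
by rewrite ler_pM2l.
Qed.

End Conv.

Section Nets.
Variable R : realType.
Variable d : nat.
Local Notation aff := (aff R d).
Local Notation ev := (@ev R d).

Definition layer e := ('M[R]_(e, d) * 'M[R]_(e, e) * 'cV[R]_e)%type.
Definition zstep e (x : 'cV[R]_d) (z : 'cV[R]_e) (L : layer e) : 'cV[R]_e :=
  relu (L.1.1 *m x + L.1.2 *m z + L.2).
Definition full_layer e (L : layer e) : affine_map R (d + e) (d + e) :=
  (block_mx 1%:M 0 L.1.1 L.1.2, col_mx 0 L.2).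
Definition first_layer e (L : layer e) : affine_map R d (d + e) :=
  (col_mx 1%:M L.1.1, col_mx 0 L.2).
Definition last_layer e (pl : 'M[R]_(1, d)) (ql : 'M[R]_(1, e)) (cl : 'cV[R]_1) :
  affine_map R (d + e) 1 := (row_mx pl ql, cl).

Lemma relu_col e (u : 'cV[R]_d) (v : 'cV[R]_e) : relu (col_mx u v) = col_mx (relu u) (relu v).
Proof.
apply/matrixP => i j; rewrite !mxE; case: splitP => k _; by rewrite !mxE.
Qed.

Lemma relu_id k (u : 'cV[R]_k) : (forall i, 0 <= u i 0) -> relu u = u.
Proof.
move=> h; apply/matrixP => i j; rewrite ord1 mxE; apply/max_idPl; exact: h.
Qed.

Lemma relu_ge0 k (u : 'cV[R]_k) i : 0 <= relu u i 0.
Proof. by rewrite relu_entry le_max lexx orbT. Qed.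

Lemma slot_net e (L0 : layer e) (Ls : seq (layer e)) (pl : 'M[R]_(1, d)) (ql : 'M[R]_(1, e)) (cl : 'cV[R]_1) :
  exists G : 'cV[R]_d -> 'cV[R]_1, relu_net_fun d (d + e) (size Ls + 2) 1 G /\
    forall x, in_cube x ->
      G x 0 0 = Num.max ((pl *m x + ql *m foldl (zstep x) 0 (L0 :: Ls) + cl) 0 0) 0.
Proof.
exists (fun x => relu (app_aff (last_layer pl ql cl)
   (foldl (fun v A => relu (app_aff A v)) (relu (app_aff (first_layer L0) x)) (map (@full_layer e) Ls)))).
split.
  right; split; first by rewrite addn2.
  exists (first_layer L0), (map (@full_layer e) Ls), (last_layer pl ql cl).
  by split => //; rewrite size_map addnK.
move=> x xc.
have xid : relu x = x by apply: relu_id => i; have /andP [] := xc i.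
have e1 : relu (app_aff (first_layer L0) x) = col_mx x (zstep x 0 L0).
  rewrite /app_aff /= mul_col_mx add_col_mx mul1mx addr0 relu_col xid.
  by rewrite /zstep mulmx0 addr0.
have e2 : forall z, foldl (fun v A => relu (app_aff A v)) (col_mx x z) (map (@full_layer e) Ls)
    = col_mx x (foldl (zstep x) z Ls).
  elim: Ls => [|L Ls IH] z //=; rewrite -IH; congr foldl.
  rewrite /app_aff /= mul_block_col add_col_mx mul1mx mul0mx !addr0 relu_col xid.
  by rewrite /zstep.
rewrite e1 e2 /app_aff /= mul_row_col relu_entry.
by rewrite /=.
Qed.

Definition lupd e (j : 'I_e) (p : aff) : layer e :=
  (\matrix_(k, i) ((k == j)%:R * p.1 i 0), 1%:M, \col_k ((k == j)%:R * p.2)).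

Lemma lupd_entry e x (j : 'I_e) p z k :
  zstep x z (lupd j p) k 0 = Num.max ((k == j)%:R * ev p x + z k 0) 0.
Proof.
rewrite /zstep relu_entry mul1mx !mxE /=; congr (Num.max _ _).
rewrite /ev mulrDr mulr_sumr.
have -> : \sum_(i < d) (k == j)%:R * (p.1 i 0 * x i 0) = \sum_j0 ((k == j)%:R * p.1 j0 0) * x j0 0.
  by apply: eq_bigr => i _; rewrite mulrA.
rewrite (eq_bigr (fun j0 => (k == j)%:R * p.1 j0 0 * x j0 0)); last by move=> i _; rewrite mxE.
ring.
Qed.

Definition chain e (j : 'I_e) (q0 : aff) (qs : seq aff) : seq (layer e) :=
  pairmap (fun a b => lupd j (subp a b)) q0 qs.

Definition fmax x (m : R) (qs : seq aff) := foldl (fun m q => Num.max m (ev q x)) m qs.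

Lemma max_sub0 (a b : R) : Num.max (a - b) 0 = Num.max a b - b.
Proof. by rewrite -maxDr subrr. Qed.

Lemma chain_fold e x (j : 'I_e) q0 qs (z : 'cV[R]_e) m :
  (forall k, 0 <= z k 0) -> z j 0 = m - ev q0 x ->
  let z' := foldl (zstep x) z (chain j q0 qs) in
  [/\ forall k, 0 <= z' k 0, z' j 0 = fmax x m qs - ev (last q0 qs) x &
      forall k, k != j -> z' k 0 = z k 0].
Proof.
elim: qs q0 z m => [|q1 qs IH] q0 z m z0 zj /=; first by split.
set z1 := zstep x z (lupd j (subp q0 q1)).
have z1j : z1 j 0 = Num.max m (ev q1 x) - ev q1 x.
  by rewrite /z1 lupd_entry eqxx mul1r ev_sub zj -max_sub0; congr (Num.max _ _); ring.
have z1k : forall k, k != j -> z1 k 0 = z k 0.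
  by move=> k /negbTE kj; rewrite /z1 lupd_entry kj mul0r add0r; apply/max_idPl.
have z10 : forall k, 0 <= z1 k 0 by move=> k; rewrite /z1 /zstep relu_ge0.
have [h1 h2 h3] := IH q1 z1 (Num.max m (ev q1 x)) z10 z1j.
split => // k kj; rewrite h3 //; exact: z1k.
Qed.

Lemma pad_fold e x (j : 'I_e) k (z : 'cV[R]_e) : (forall i, 0 <= z i 0) ->
  foldl (zstep x) z (nseq k (lupd j (0, 0))) = z.
Proof.
move=> z0; elim: k => [|k IH] //=.
have -> : zstep x z (lupd j (0, 0)) = z.
  apply/matrixP => i i'; rewrite ord1 lupd_entry ev_const mulr0 add0r; apply/max_idPl; exact: z0.
exact: IH.
Qed.

Lemma ismax_fmax x q0 qs : ismax [seq ev p x | p <- q0 :: qs] (fmax x (ev q0 x) qs).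
Proof.
suff H : forall m, ismax (m :: [seq ev p x | p <- qs]) (fmax x m qs) by exact: H.
elim: qs => [|q qs IH] m /=.
  by split; [rewrite mem_head | move=> y; rewrite inE => /eqP ->].
have [Hin Hub] := IH (Num.max m (ev q x)).
split.
  move: Hin; rewrite !inE => /orP [/eqP ->|->]; last by rewrite !orbT.
  by case: (leP m (ev q x)) => _; rewrite eqxx ?orbT.
move=> y; rewrite !inE => /orP [/eqP ->|/orP [/eqP ->| yin]].
- apply: le_trans (Hub _ (mem_head _ _)); by rewrite le_max lexx.
- apply: le_trans (Hub _ (mem_head _ _)); by rewrite le_max lexx orbT.
- by apply: Hub; rewrite inE yin orbT.
Qed.


Lemma addmE m n (A B : 'M[R]_(m, n)) i j : (A + B) i j = A i j + B i j.
Proof. by rewrite mxE. Qed.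

Lemma row_lin (a x : 'cV[R]_d) : (a^T *m x) 0 0 = lin a x.
Proof. by rewrite mxE; apply: eq_bigr => i _; rewrite mxE. Qed.

Lemma sum_delta e (j : 'I_e) (f : 'I_e -> R) : \sum_k (k == j)%:R * f k = f j.
Proof.
rewrite (bigD1 j) //= eqxx mul1r big1 ?addr0 // => k /negbTE ->; by rewrite mul0r.
Qed.

Lemma row_delta e (j1 j2 : 'I_e) (z : 'cV[R]_e) :
  (\row_k ((k == j1)%:R - (k == j2)%:R) *m z) 0 0 = z j1 0 - z j2 0.
Proof.
rewrite mxE (eq_bigr (fun k => (k == j1)%:R * z k 0 - (k == j2)%:R * z k 0)).
  by rewrite sumrB !sum_delta.
by move=> k _; rewrite mxE mulrBl.
Qed.

Lemma net_general (g0 g1 : aff) gs h0 hs k :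
  exists G : 'cV[R]_d -> 'cV[R]_1, relu_net_fun d (d + 3) (size gs + size hs + k + 2) 1 G /\
    forall x, in_cube x ->
      G x 0 0 = Num.max (fmax x (ev g0 x) (g1 :: gs) - fmax x (ev h0 x) hs) 0.
Proof.
set gl := last g1 gs; set hl := last h0 hs; set c := subp gl hl.
pose Ls : seq (layer 3) := chain 0 g1 gs ++ chain 1 h0 hs ++ nseq k (lupd 0 (0, 0)).
have [G [HG HGx]] := slot_net (lupd 0 (subp g0 g1)) Ls (c.1)^T
   (\row_k ((k == 0)%:R - (k == 1)%:R)) (\col_ _ c.2).
exists G; split.
  suff -> : (size gs + size hs + k + 2 = size Ls + 2)%N by [].
  by rewrite /Ls !size_cat !size_pairmap size_nseq addnA.
move=> x xc; rewrite HGx //; congr (Num.max _ _).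
rewrite /Ls -cat_cons foldl_cat.
have z00 : forall i, 0 <= (0 : 'cV[R]_3) i 0 by move=> i; rewrite mxE.
have zj : (0 : 'cV[R]_3) 0 0 = ev g0 x - ev g0 x by rewrite mxE subrr.
have [A1 A2 A3] := chain_fold (g1 :: gs) z00 zj.
set z1 := foldl _ _ (chain 0 g0 (g1 :: gs)) in A1 A2 A3.
have z1_1 : z1 1 0 = ev h0 x - ev h0 x by rewrite A3 // mxE subrr.
have [B1 B2 B3] := chain_fold hs A1 z1_1.
rewrite foldl_cat pad_fold //.
set z2 := foldl _ _ (chain 1 h0 hs) in B1 B2 B3 *.
rewrite !addmE row_lin row_delta mxE B2 B3 // A2 /= -/gl -/hl /c.
rewrite /subp /= linB !evE; ring.
Qed.

Lemma net_convex (g0 g1 : aff) gs :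
  exists G : 'cV[R]_d -> 'cV[R]_1, relu_net_fun d (d + 1) (size gs + 2) 1 G /\
    forall x, in_cube x -> G x 0 0 = Num.max (fmax x (ev g0 x) (g1 :: gs)) 0.
Proof.
set gl := last g1 gs.
have [G [HG HGx]] := slot_net (lupd 0 (subp g0 g1)) (chain 0 g1 gs) (gl.1)^T
   1%:M (\col_ _ gl.2).
exists G; split; first by rewrite size_pairmap in HG.
move=> x xc; rewrite HGx //; congr (Num.max _ _).
have z00 : forall i, 0 <= (0 : 'cV[R]_1) i 0 by move=> i; rewrite mxE.
have zj : (0 : 'cV[R]_1) 0 0 = ev g0 x - ev g0 x by rewrite mxE subrr.
have [A1 A2 A3] := chain_fold (g1 :: gs) z00 zj.
rewrite mul1mx !addmE row_lin mxE [X in foldl _ _ X]/= A2 /= -/gl !evE; ring.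
Qed.

End Nets.

Section Final.
Variable R : realType.
Variable d : nat.
Local Notation aff := (aff R d).
Local Notation ev := (@ev R d).

Definition bnd (p : aff) : R := \sum_(i < d) `|p.1 i 0| + `|p.2|.

Lemma abs_facts (a : R) : - `|a| <= a /\ a <= `|a|.
Proof. by split; [rewrite lerNl -normrN ler_norm | rewrite ler_norm]. Qed.

Lemma bnd_ge0 p : 0 <= bnd p.
Proof. by rewrite /bnd addr_ge0 // sumr_ge0. Qed.

Lemma ev_lb p x : in_cube x -> - bnd p <= ev p x.
Proof.
move=> xc; rewrite /bnd /ev opprD -sumrN; apply: lerD; last by have [] := abs_facts p.2.
apply: ler_sum => i _; have /andP [x0 x1] := xc i.
have [h1 h2] := abs_facts (p.1 i 0); nra.
Qed.

Lemma sub_exists (T : eqType) (l : seq T) (P : T -> Prop) :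
  exists l' : seq T, forall t, t \in l' <-> (t \in l /\ P t).
Proof.
elim: l => [|a l [l' IH]]; first by exists (@nil T) => t; split => // [[]].
case: (classic (P a)) => Pa.
  exists (a :: l') => t; rewrite !inE; split.
    by case/orP => [/eqP -> | /IH [tl Pt]]; [rewrite eqxx | rewrite tl orbT].
  by case=> /orP [/eqP -> | tl] Pt; [rewrite eqxx | rewrite (proj2 (IH t)) ?orbT].
exists l' => t; rewrite inE; split.
  by move/IH => [tl Pt]; rewrite tl orbT.
by case=> /orP [/eqP -> // | tl] Pt; apply/IH.
Qed.

Lemma big_max_prop (I : eqType) (r : seq I) (F : I -> R) x0 :
  let b := \big[Num.max/x0]_(i <- r) F i in
  (b = x0 \/ b \in map F r) /\ forall i, i \in r -> F i <= b.
Proof.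
elim: r => [|i r [IH1 IH2]] /=; first by rewrite big_nil; split => //; left.
rewrite big_cons; split.
  case: (leP (F i) (\big[Num.max/x0]_(j <- r) F j)) => _; last by right; rewrite mem_head.
  by case: IH1 => [->|h]; [left | right; rewrite inE h orbT].
move=> j; rewrite inE => /orP [/eqP -> | jr]; first by rewrite le_max lexx.
by rewrite le_max IH2 ?orbT.
Qed.

Lemma max_fam_fmax p0 ps (x : 'cV[R]_d) :
  max_fam (fun (i : 'I_(size ps).+1) x => ev (nth p0 (p0 :: ps) i) x) x = fmax x (ev p0 x) ps.
Proof.
apply: (ismax_uniq _ (ismax_fmax x p0 ps)).
set g := fun (i : 'I_(size ps).+1) x => ev (nth p0 (p0 :: ps) i) x.
have H : ismax [seq g i x | i <- index_enum 'I_(size ps).+1] (max_fam g x).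
  have [H1 H2] := big_max_prop (index_enum 'I_(size ps).+1) (fun i => g i x) (g ord0 x).
  rewrite /max_fam; split; last by move=> y /mapP [i ir ->]; apply: H2.
  case: H1 => [->|//]; apply: map_f; exact: mem_index_enum.
apply: ismax_mem H => y; apply/mapP/mapP => [[i _ ->] | [p pin ->]].
  by exists (nth p0 (p0 :: ps) i) => //; apply: mem_nth.
have ilt : (index p (p0 :: ps) < (size ps).+1)%N by rewrite -[X in (_ < X)%N]/(size (p0 :: ps)) index_mem.
exists (Ordinal ilt); first exact: mem_index_enum.
by rewrite /g /= nth_index.
Qed.

Lemma maxaff_list phi : maxaff phi -> exists p0 ps, forall x, ismax [seq ev p x | p <- p0 :: ps] (phi x).
Proof.
move=> [l hl]; case: l hl => [|p0 ps] hl; last by exists p0, ps.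
by have [] := hl 0.
Qed.

End Final.

Unset Implicit Arguments.

Theorem theorem2 (R : realType) (d w n : nat) (F : 'cV[R]_d -> 'cV[R]_1) :
  (0 < d)%N -> (0 < w)%N -> relu_net_fun d w n 1 F ->
  exists (N M : nat) (g : 'I_N.+1 -> 'cV[R]_d -> R) (h : 'I_M.+1 -> 'cV[R]_d -> R),
    (forall a, affine_fun (g a)) /\ (forall b, affine_fun (h b)) /\
    (forall x, in_cube x ->
       [/\ F x 0 0 = max_fam g x - max_fam h x, 0 <= max_fam g x & 0 <= max_fam h x]) /\
    (exists G : 'cV[R]_d -> 'cV[R]_1,
       relu_net_fun d (d + 3) (2 * (M.+1 + N.+1)) 1 G /\
       forall x, in_cube x -> G x 0 0 = F x 0 0) /\
    (convex_on_cube (fun x => F x 0 0) ->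
       (forall x, in_cube x -> max_fam h x = 0) /\
       exists G : 'cV[R]_d -> 'cV[R]_1,
         relu_net_fun d (d + 1) N.+1 1 G /\
         forall x, in_cube x -> G x 0 0 = F x 0 0).
Proof.
move=> _ _ hnet.
have [[g [h [Gg [Gh E]]]] Fge0] := net_DC hnet.
have zc : in_cube (0 : 'cV[R]_d) by move=> i; rewrite mxE lexx ler01.
case: (classic (convex_on_cube (fun x => F x 0 0))) => conv.
-
  have [p0 [ps hg]] := maxaff_list Gg.
  have [q0 [qs hh]] := maxaff_list Gh.
  have [Lc HLc] := sub_exists [seq subp p q | p <- p0 :: ps, q <- q0 :: qs]
     (fun r => forall z, in_cube z -> ev r z <= F z 0 0).
  have hLc : forall y, in_cube y -> ismax [seq ev r y | r <- Lc] (F y 0 0).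
    move=> y yc.
    have [p [q [pl ql e good]]] := convex_piece hg hh E conv yc.
    have rin : subp p q \in Lc.
      apply/HLc; split; first by apply/allpairsP; exists (p, q).
      by move=> z zc'; rewrite ev_sub; apply: good.
    split; first by apply/mapP; exists (subp p q); rewrite // ev_sub.
    by move=> t /mapP [r /HLc [_ gr] ->]; apply: gr.
  case: Lc HLc hLc => [|c0 cs] HLc hLc; first by have [] := hLc 0 zc.
  pose gg := fun (i : 'I_(size (c0 :: cs)).+1) x => ev (nth c0 (c0 :: c0 :: cs) i) x.
  pose p00 : aff R d := (0, 0).
  pose hh0 := fun (i : 'I_(size (@nil (aff R d))).+1) (x : 'cV[R]_d) => ev (nth p00 [:: p00] i) x.
  have Mg : forall x, in_cube x -> max_fam gg x = F x 0 0.
    move=> x xc; rewrite /gg max_fam_fmax.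
    apply: (ismax_uniq (ismax_fmax x c0 (c0 :: cs))).
    apply: ismax_mem (hLc x xc) => t; rewrite /= !inE; by case: (t == ev c0 x).
  have Mh : forall x, max_fam hh0 x = 0.
    by move=> x; rewrite /hh0 max_fam_fmax /= /p00 ev_const.
  exists (size (c0 :: cs)), (size (@nil (aff R d))), gg, hh0.
  split; first by move=> a; exists (nth c0 (c0 :: c0 :: cs) a).1, (nth c0 (c0 :: c0 :: cs) a).2.
  split; first by move=> b; exists (nth p00 [:: p00] b).1, (nth p00 [:: p00] b).2.
  split.
    by move=> x xc; rewrite Mg // Mh subr0; split.
  split.
    have [G [HG HGx]] := net_general c0 c0 cs p00 [::] (size cs + 4).
    exists G; split.
      suff <- : (size cs + size (@nil (aff R d)) + (size cs + 4) + 2 = 2 * ((size (@nil (aff R d))).+1 + (size (c0 :: cs)).+1))%N by [].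
      by rewrite /=; lia.
    move=> x xc; rewrite HGx //.
    have -> : fmax x (ev p00 x) [::] = 0 by rewrite /= /p00 ev_const.
    rewrite subr0.
    have -> : fmax x (ev c0 x) (c0 :: cs) = F x 0 0 by rewrite -Mg // /gg max_fam_fmax.
    by apply/max_idPl.
  move=> _; split; first by move=> x _; apply: Mh.
  have [G [HG HGx]] := net_convex c0 c0 cs.
  exists G; split; first by rewrite addn2 in HG.
  move=> x xc; rewrite HGx //.
  have -> : fmax x (ev c0 x) (c0 :: cs) = F x 0 0 by rewrite -Mg // /gg max_fam_fmax.
  by apply/max_idPl.
-
  have [p0 [ps hg0]] := maxaff_list Gg.
  have [q0 [qs hh0]] := maxaff_list Gh.
  pose K := bnd p0 + bnd q0.
  have [a0 [as_ hg]] := maxaff_list (maxaff_add Gg (maxaff_aff (0, K))).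
  have [b0 [bs hh]] := maxaff_list (maxaff_add Gh (maxaff_aff (0, K))).
  pose gg := fun (i : 'I_(size (a0 :: as_)).+1) x => ev (nth a0 (a0 :: a0 :: as_) i) x.
  pose hh1 := fun (i : 'I_(size bs).+1) x => ev (nth b0 (b0 :: bs) i) x.
  have Mg : forall x, max_fam gg x = g x + K.
    move=> x; rewrite /gg max_fam_fmax -(ev_const K x).
    apply: (ismax_uniq (ismax_fmax x a0 (a0 :: as_))).
    apply: ismax_mem (hg x) => t; rewrite /= !inE; by case: (t == ev a0 x).
  have Mh : forall x, max_fam hh1 x = h x + K.
    move=> x; rewrite /hh1 max_fam_fmax -(ev_const K x).
    exact: (ismax_uniq (ismax_fmax x b0 bs)).
  exists (size (a0 :: as_)), (size bs), gg, hh1.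
  split; first by move=> a; exists (nth a0 (a0 :: a0 :: as_) a).1, (nth a0 (a0 :: a0 :: as_) a).2.
  split; first by move=> b; exists (nth b0 (b0 :: bs) b).1, (nth b0 (b0 :: bs) b).2.
  have pos : forall x, in_cube x -> 0 <= g x + K /\ 0 <= h x + K.
    move=> x xc.
    have lg : ev p0 x <= g x by have [_ ub] := hg0 x; apply: ub; rewrite /= mem_head.
    have lh : ev q0 x <= h x by have [_ ub] := hh0 x; apply: ub; rewrite /= mem_head.
    have := ev_lb p0 xc; have := ev_lb q0 xc; have := bnd_ge0 p0; have := bnd_ge0 q0.
    rewrite /K; lra.
  split.
    move=> x xc; rewrite Mg Mh E; have [P1 P2] := pos x xc; split => //; ring.
  split.
    have [G [HG HGx]] := net_general a0 a0 as_ b0 bs (size as_ + size bs + 4).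
    exists G; split.
      suff <- : (size as_ + size bs + (size as_ + size bs + 4) + 2 = 2 * ((size bs).+1 + (size (a0 :: as_)).+1))%N by [].
      by rewrite /=; lia.
    move=> x xc; rewrite HGx //.
    rewrite -(max_fam_fmax a0 (a0 :: as_)) -(max_fam_fmax b0 bs) -/gg -/hh1 Mg Mh E.
    have -> : g x + K - (h x + K) = g x - h x by ring.
    by apply/max_idPl; rewrite -E.
  by move=> /conv.
Qed.
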